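(* Let $a<b$ be real numbers and let $C[a,b]$ be the space of real continuous functions on $[a,b]$ with the norm $\|x\|=\sup_{t\in[a,b]}|x(t)|$; let $\ell_1$ be the space of real sequences with $\|x\|_1=\sum_i|x_i|<\infty$, and $\ell_\infty$ the space of bounded real sequences with $\|x\|_\infty=\sup_n|x_n|$. Then $S_P(C[a,b])=S_P(\ell_1)=S_P(\ell_\infty)=\tfrac12$; consequently none of $C[a,b]$, $\ell_1$, $\ell_\infty$ is uniformly non-square.
   Context: For a real Banach space $X$ with unit sphere $S_X$, the P-angle constant is $S_P(X)=\sup\left\{\frac{\|x+y\|^2+\|x-y\|^2-4}{2\|x+y\|\,\|x-y\|}: x,y\in S_X,\ x\neq \pm y\right\}$. $X$ is uniformly non-square if there exists $\delta\in(0,1)$ such that for all $x,y\in S_X$, either $\frac{\|x-y\|}{2}\le 1-\delta$ or $\frac{\|x+y\|}{2}\le 1-\delta$. *)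

(* Defs.v *)
From Stdlib Require Import Reals.
From Coquelicot Require Import Coquelicot.
Open Scope R_scope.

(** * Abstract setting: a real normed space presented by a carrier type [V],
    a membership predicate [inX] (the elements of the space), the norm [N],
    vector addition [add] and negation [opp]. *)

Section NormedPresentation.
Variables (V : Type) (inX : V -> Prop) (N : V -> R)
          (add : V -> V -> V) (opp : V -> V).

Definition in_sphere (x : V) : Prop := inX x /\ N x = 1.

Definition SP_set (q : R) : Prop :=
  exists x y : V, in_sphere x /\ in_sphere y /\ x <> y /\ x <> opp y /\
    q = ((N (add x y))^2 + (N (add x (opp y)))^2 - 4)
        / (2 * N (add x y) * N (add x (opp y))).

Definition S_P : Rbar := Lub_Rbar SP_set.

Definition uniformly_non_square : Prop :=
  exists delta : R, 0 < delta < 1 /\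
    forall x y : V, in_sphere x -> in_sphere y ->
      N (add x (opp y)) / 2 <= 1 - delta \/ N (add x y) / 2 <= 1 - delta.
End NormedPresentation.

Arguments S_P {V} inX N add opp.
Arguments uniformly_non_square {V} inX N add opp.

Definition Icc (a b : R) : Type := {t : R | a <= t <= b}.

Definition C_mem (a b : R) (f : Icc a b -> R) : Prop :=
  forall t : Icc a b, forall eps : R, 0 < eps ->
    exists delta : R, 0 < delta /\
      forall s : Icc a b, Rabs (proj1_sig s - proj1_sig t) < delta ->
        Rabs (f s - f t) < eps.

Definition C_norm (a b : R) (f : Icc a b -> R) : R :=
  real (Lub_Rbar (fun r => exists t : Icc a b, r = Rabs (f t))).

Definition C_add (a b : R) (f g : Icc a b -> R) : Icc a b -> R :=
  fun t => f t + g t.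
Definition C_opp (a b : R) (f : Icc a b -> R) : Icc a b -> R :=
  fun t => - f t.

Definition seq_add (x y : nat -> R) : nat -> R := fun n => x n + y n.
Definition seq_opp (x : nat -> R) : nat -> R := fun n => - x n.

Definition l1_mem (x : nat -> R) : Prop := ex_series (fun n => Rabs (x n)).
Definition l1_norm (x : nat -> R) : R := Series (fun n => Rabs (x n)).

Definition linf_mem (x : nat -> R) : Prop :=
  exists M : R, forall n, Rabs (x n) <= M.
Definition linf_norm (x : nat -> R) : R :=
  real (Lub_Rbar (fun r => exists n : nat, r = Rabs (x n))).

(* Main.v *)
Require Import Defs.
From Coquelicot Require Import Coquelicot.
From Stdlib Require Import Reals Lra Lia.
Open Scope R_scope.
Lemma is_series_zero (f : nat -> R) : (forall k, f k = 0) -> is_series f 0.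
Proof.
  intros H. unfold is_series.
  apply filterlim_ext with (fun _ => 0).
  - intros n. induction n. rewrite sum_O, H; reflexivity.
    rewrite sum_Sn, <- IHn, H. compute. ring.
  - apply filterlim_const.
Qed.
Lemma series2 (f : nat -> R) : (forall k, f (S (S k)) = 0) -> is_series f (f O + f 1%nat).
Proof.
  intros H. apply is_series_decr_n with 2%nat. lia.
  simpl. match goal with |- is_series _ ?l => replace l with 0 end.
  apply is_series_zero. intros; apply H.
  rewrite sum_Sn, sum_O. compute. ring.
Qed.

Lemma quot_bound (u v : R) : 0 <= u <= 2 -> 0 <= v <= 2 ->
  (u^2 + v^2 - 4) / (2 * u * v) <= 1/2.
Proof.
  intros Hu Hv.
  destruct (Req_dec (u*v) 0) as [E|E].
  - replace (2*u*v) with 0 by nra. unfold Rdiv. rewrite Rinv_0. lra.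
  - assert (P : 0 < 2*u*v) by nra.
    apply Rmult_le_reg_r with (2*u*v); auto.
    unfold Rdiv. rewrite Rmult_assoc, Rinv_l by lra. nra.
Qed.

Lemma generic (V:Type) inX N add opp
 (Hb : forall x y, in_sphere V inX N x -> in_sphere V inX N y ->
     0 <= N (add x y) <= 2 /\ 0 <= N (add x (opp y)) <= 2)
 (x0 y0 : V) (Hx : in_sphere V inX N x0) (Hy : in_sphere V inX N y0)
 (Hne1 : x0 <> y0) (Hne2 : x0 <> opp y0)
 (H1 : N (add x0 y0) = 2) (H2 : N (add x0 (opp y0)) = 2) :
 S_P inX N add opp = Finite (1/2) /\ ~ uniformly_non_square inX N add opp.
Proof.
  split.
  - apply is_lub_Rbar_unique. split.
    + intros q (x & y & Hx' & Hy' & _ & _ & ->). simpl.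
      destruct (Hb x y Hx' Hy'). apply quot_bound; auto.
    + intros l Hl. apply Hl. exists x0, y0.
      refine (conj Hx (conj Hy (conj Hne1 (conj Hne2 _)))).
      rewrite H1, H2. field.
  - intros (d & Hd & H). destruct (H x0 y0 Hx Hy) as [E|E];
    [rewrite H2 in E | rewrite H1 in E]; lra.
Qed.

Lemma series2' (f : nat -> R) l : (forall k, f (S (S k)) = 0) -> l = f O + f 1%nat -> is_series f l.
Proof. intros H ->. apply series2; auto. Qed.

Section Sup.
Variable T : Type.
Lemma sup_one (f : T -> R) : real (Lub_Rbar (fun r => exists t, r = Rabs (f t))) = 1 ->
  forall t, Rabs (f t) <= 1.
Proof.
  intros E t. destruct (Lub_Rbar_correct (fun r => exists t, r = Rabs (f t))) as [U _].
  destruct (Lub_Rbar _) as [r| |] eqn:Q; simpl in E; try lra.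
  subst r. apply (U (Rabs (f t))). exists t; auto.
Qed.
Lemma sup_le (f : T -> R) M (t0 : T) : (forall t, Rabs (f t) <= M) ->
  0 <= real (Lub_Rbar (fun r => exists t, r = Rabs (f t))) <= M.
Proof.
  intros H. destruct (Lub_Rbar_correct (fun r => exists t, r = Rabs (f t))) as [U L].
  assert (L2 : Rbar_le (Lub_Rbar (fun r => exists t, r = Rabs (f t))) M).
  { apply L. intros r [t ->]. apply H. }
  assert (L1 := U (Rabs (f t0)) (ex_intro _ t0 eq_refl)).
  destruct (Lub_Rbar _) as [r| |]; simpl in *; try contradiction.
  pose proof (Rabs_pos (f t0)). lra.
Qed.
Lemma sup_eq (f : T -> R) M (t0 : T) : (forall t, Rabs (f t) <= M) -> Rabs (f t0) = M ->
  real (Lub_Rbar (fun r => exists t, r = Rabs (f t))) = M.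
Proof.
  intros H H0. rewrite (is_lub_Rbar_unique _ (Finite M)). reflexivity.
  split.
  - intros r [t ->]. apply H.
  - intros l Hl. apply Hl. exists t0; auto.
Qed.
End Sup.

Ltac absr := unfold Rabs in *; repeat destruct Rcase_abs; lra.

Lemma C_part (a b : R) (hab : a < b) :
  S_P (C_mem a b) (C_norm a b) (C_add a b) (C_opp a b) = Finite (1/2) /\
  ~ uniformly_non_square (C_mem a b) (C_norm a b) (C_add a b) (C_opp a b).
Proof.
  set (ta := exist (fun t => a <= t <= b) a (conj (Rle_refl a) (Rlt_le _ _ hab)) : Icc a b).
  set (tb := exist (fun t => a <= t <= b) b (conj (Rlt_le _ _ hab) (Rle_refl b)) : Icc a b).
  assert (K : forall t, a <= t <= b -> -1 <= (2*t-a-b)/(b-a) <= 1).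
  { intros t Ht. unfold Rdiv. assert (Hk : 0 < / (b-a)) by (apply Rinv_0_lt_compat; lra).
    assert (Hk1 : (b-a) * / (b-a) = 1) by (field; lra).
    assert (0 <= (t-a) * / (b-a)) by nra. assert (0 <= (b-t) * / (b-a)) by nra. nra. }
  apply generic with (x0 := fun _ => 1) (y0 := fun t => (2*proj1_sig t-a-b)/(b-a)).
  - intros x y [_ Hx] [_ Hy]. unfold C_norm in Hx, Hy.
    pose proof (sup_one _ _ Hx) as Bx. pose proof (sup_one _ _ Hy) as By.
    unfold C_norm; split; apply (sup_le _ _ _ ta); intros t; unfold C_add, C_opp.
    + specialize (Bx t); specialize (By t); absr.
    + specialize (Bx t); specialize (By t); absr.
  - split.
    + intros t eps He. exists 1; split; [lra|]. intros; absr.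
    + unfold C_norm. apply (sup_eq _ _ _ ta); intros; absr.
  - split.
    + intros t eps He. exists (eps*(b-a)/2). split. apply Rmult_lt_0_compat; [|lra]. apply Rmult_lt_0_compat; lra.
      intros s Hs.
      replace ((2 * proj1_sig s - a - b) / (b - a) - (2 * proj1_sig t - a - b) / (b - a))
        with (2/(b-a) * (proj1_sig s - proj1_sig t)) by (field; lra).
      assert (Hk : 0 < 2 / (b-a)) by (unfold Rdiv; apply Rmult_lt_0_compat; [lra|apply Rinv_0_lt_compat; lra]).
      rewrite Rabs_mult, (Rabs_pos_eq (2/(b-a))) by lra.
      apply Rlt_le_trans with (2/(b-a) * (eps*(b-a)/2)).
      * apply Rmult_lt_compat_l; auto.
      * right; field; lra.
    + unfold C_norm. apply (sup_eq _ _ _ tb).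
      * intros [t Ht]; simpl. specialize (K t Ht). absr.
      * simpl. replace ((2 * b - a - b) / (b - a)) with 1 by (field; lra). absr.
  - intros E. apply (f_equal (fun f => f ta)) in E. simpl in E.
    replace ((2 * a - a - b) / (b - a)) with (-1) in E by (field; lra). lra.
  - intros E. apply (f_equal (fun f => f tb)) in E. unfold C_opp in E; simpl in E.
    replace ((2 * b - a - b) / (b - a)) with 1 in E by (field; lra). lra.
  - unfold C_norm. apply (sup_eq _ _ _ tb).
    + intros [t Ht]; unfold C_add; simpl. specialize (K t Ht). absr.
    + unfold C_add; simpl. replace ((2 * b - a - b) / (b - a)) with 1 by (field; lra). absr.
  - unfold C_norm. apply (sup_eq _ _ _ ta).
    + intros [t Ht]; unfold C_add, C_opp; simpl. specialize (K t Ht). absr.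
    + unfold C_add, C_opp; simpl. replace ((2 * a - a - b) / (b - a)) with (-1) by (field; lra). absr.
Qed.

Lemma linf_part :
  S_P linf_mem linf_norm seq_add seq_opp = Finite (1/2) /\
  ~ uniformly_non_square linf_mem linf_norm seq_add seq_opp.
Proof.
  apply generic with (x0 := fun _ => 1) (y0 := fun n => match n with O => 1 | _ => -1 end).
  - intros x y [_ Hx] [_ Hy]. unfold linf_norm in Hx, Hy.
    pose proof (sup_one _ _ Hx) as Bx. pose proof (sup_one _ _ Hy) as By.
    unfold linf_norm; split; apply (sup_le _ _ _ O); intros t; unfold seq_add, seq_opp.
    + specialize (Bx t); specialize (By t); absr.
    + specialize (Bx t); specialize (By t); absr.
  - split. exists 1; intros; absr. unfold linf_norm. apply (sup_eq _ _ _ O); intros; absr.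
  - split. exists 1; intros [|n]; absr. unfold linf_norm. apply (sup_eq _ _ _ O); [intros [|n]|]; absr.
  - intros E. apply (f_equal (fun f => f 1%nat)) in E. simpl in E. lra.
  - intros E. apply (f_equal (fun f => f 0%nat)) in E. unfold seq_opp in E; simpl in E. lra.
  - unfold linf_norm. apply (sup_eq _ _ _ O); [intros [|n]|]; unfold seq_add; absr.
  - unfold linf_norm. apply (sup_eq _ _ _ 1%nat); [intros [|n]|]; unfold seq_add, seq_opp; absr.
Qed.

Lemma Series_nonneg (f : nat -> R) : (forall n, 0 <= f n) -> ex_series f -> 0 <= Series f.
Proof.
  intros H E. rewrite <- (is_series_unique (fun _ => 0) 0) by (apply is_series_zero; auto).
  apply Series_le; auto. intros n; split; [lra|auto].
Qed.

Lemma l1_part :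
  S_P l1_mem l1_norm seq_add seq_opp = Finite (1/2) /\
  ~ uniformly_non_square l1_mem l1_norm seq_add seq_opp.
Proof.
  apply generic with (x0 := fun n => match n with O => 1 | _ => 0 end)
                     (y0 := fun n => match n with 1%nat => 1 | _ => 0 end).
  - intros x y [Ex Hx] [Ey Hy]. unfold l1_norm in *. unfold l1_mem in *.
    assert (ES : ex_series (fun n => Rabs (x n) + Rabs (y n))) by exact (ex_series_plus _ _ Ex Ey).
    assert (SS : Series (fun n => Rabs (x n) + Rabs (y n)) = 2) by (rewrite Series_plus; auto; lra).
    split; split.
    + apply Series_nonneg. intros; apply Rabs_pos.
      apply (@ex_series_le R_AbsRing R_CompleteNormedModule) with (fun n => Rabs (x n) + Rabs (y n)); auto.
      intros n. change (norm (Rabs (seq_add x y n))) with (Rabs (Rabs (seq_add x y n))).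
      rewrite Rabs_Rabsolu. unfold seq_add. apply Rabs_triang.
    + rewrite <- SS. apply Series_le; auto. intros n; split. apply Rabs_pos. unfold seq_add. apply Rabs_triang.
    + apply Series_nonneg. intros; apply Rabs_pos.
      apply (@ex_series_le R_AbsRing R_CompleteNormedModule) with (fun n => Rabs (x n) + Rabs (y n)); auto.
      intros n. change (norm (Rabs (seq_add x (seq_opp y) n))) with (Rabs (Rabs (seq_add x (seq_opp y) n))).
      rewrite Rabs_Rabsolu. unfold seq_add, seq_opp. rewrite <- (Rabs_Ropp (y n)). apply Rabs_triang.
    + rewrite <- SS. apply Series_le; auto. intros n; split. apply Rabs_pos. unfold seq_add, seq_opp.
      rewrite <- (Rabs_Ropp (y n)). apply Rabs_triang.
  - assert (I : is_series (fun n => Rabs (match n with O => 1 | _ => 0 end)) 1).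
    { apply series2'. intros; simpl; absr. simpl; absr. }
    split. exists 1; exact I. unfold l1_norm. apply is_series_unique; exact I.
  - assert (I : is_series (fun n => Rabs (match n with 1%nat => 1 | _ => 0 end)) 1).
    { apply series2'. intros; simpl; absr. simpl; absr. }
    split. exists 1; exact I. unfold l1_norm. apply is_series_unique; exact I.
  - intros E. apply (f_equal (fun f => f 1%nat)) in E. simpl in E. lra.
  - intros E. apply (f_equal (fun f => f 0%nat)) in E. unfold seq_opp in E; simpl in E. lra.
  - unfold l1_norm. apply is_series_unique.
    apply series2'. intros; unfold seq_add; simpl; absr. unfold seq_add; simpl; absr.
  - unfold l1_norm. apply is_series_unique.
    apply series2'. intros; unfold seq_add, seq_opp; simpl; absr. unfold seq_add, seq_opp; simpl; absr.
Qed.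

Theorem mainTheorem13 (a b : R) (hab : a < b) :
  S_P (C_mem a b) (C_norm a b) (C_add a b) (C_opp a b) = Finite (1/2) /\
  S_P l1_mem l1_norm seq_add seq_opp = Finite (1/2) /\
  S_P linf_mem linf_norm seq_add seq_opp = Finite (1/2) /\
  ~ uniformly_non_square (C_mem a b) (C_norm a b) (C_add a b) (C_opp a b) /\
  ~ uniformly_non_square l1_mem l1_norm seq_add seq_opp /\
  ~ uniformly_non_square linf_mem linf_norm seq_add seq_opp.
Proof.
  destruct (C_part a b hab), l1_part, linf_part. tauto.
Qed.
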